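(* Let $m\geqslant 1$ and $n\geqslant 0$ be integers. Consider the $n$-dimensional corner preference parking problem with $L=2m$ and $\ell=m$, and let $Y_n$ be the number of cars parked after the first car at the time of saturation (with $Y_0=0$). Then for every $n\geqslant 1$, \[ \mathbb{E}(u^{Y_n}) = u \sum_{1\leqslant k\leqslant n} \binom{n}{k}\frac{m^k-(m-1)^k}{(m+1)^n-m^n}\, \mathbb{E}\bigl(u^{Y_{n-k}}\bigr). \]
   Context: Corner preference parking problem: cars are integral translates of the cube $[0,m]^n$ inside $[0,2m]^n$, each represented by its corner closest to the origin, i.e. by a point of $Z_m^n:=\{\mathbf{a}=(a_1,\dots,a_n): a_j\in\{0,1,\dots,m\}\}$. Let $\rho(\mathbf{x},\mathbf{y}):=\max_{1\leqslant j\leqslant n}|x_j-y_j|$. For $\mathbf{a}\in Z_m^n$ let $S(\mathbf{a}):=\{\mathbf{x}\in Z_m^n: 0\leqslant x_j\leqslant a_j,\ j=1,\dots,n\}$, $U(\mathbf{a},m):=\{\mathbf{x}\in Z_m^n:\rho(\mathbf{x},\mathbf{a})<m\}$ and $S_U(\mathbf{a},m):=S(\mathbf{a})\setminus U(\mathbf{a},m)$. The first car is parked at $\mathbf{a}(1)=(m,\dots,m)$. Given the most recently parked car $\mathbf{a}(k)$, the next car $\mathbf{a}(k+1)$ is chosen uniformly at random among the points of $S_U(\mathbf{a}(k),m)$ (so each new car is coordinatewise no larger than the previous one and does not overlap the previously parked cars); the process stops (saturation) when no such position exists. All possible parking positions are equally likely at each stage. *)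

(* Defs.v *)
From mathcomp Require Import all_boot all_order all_algebra.
Set Implicit Arguments. Unset Strict Implicit. Unset Printing Implicit Defensive.
Import Order.TTheory GRing.Theory Num.Theory.

Definition pt (m n : nat) := {ffun 'I_n -> 'I_m.+1}.

Definition rho (m n : nat) (x y : pt m n) : nat :=
  \max_(j < n) maxn (x j - y j) (y j - x j).

Definition Sbox (m n : nat) (a : pt m n) : {set pt m n} :=
  [set x : pt m n | [forall j, (x j <= a j)%N]].

Definition Uball (m n : nat) (a : pt m n) : {set pt m n} :=
  [set x : pt m n | (rho x a < m)%N].

(* S_U(a,m) = S(a) \ U(a,m): the admissible positions for the next car. *)
Definition SU (m n : nat) (a : pt m n) : {set pt m n} := Sbox a :\: Uball a.

Definition first_car (m n : nat) : pt m n := [ffun => ord_max].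

(* pgf_from fuel a = E(u^{number of cars parked after a}) when the most recently
   parked car is at a: if S_U(a) is empty the process stops (contributing u^0 = 1);
   otherwise the next car is uniform on S_U(a), contributing a factor u.
   The fuel only guarantees termination; it is never exhausted when
   fuel > sum of coordinates of a, since each step strictly decreases that sum. *)
Fixpoint pgf_from (R : fieldType) (m n : nat) (u : R) (fuel : nat) (a : pt m n) : R :=
  match fuel with
  | 0 => 1%R
  | f.+1 =>
      if #|SU a| == 0%N then 1%R
      else ((#|SU a|%:R)^-1 * \sum_(b in SU a) u * pgf_from u f b)%R
  end.

Definition EY (R : fieldType) (m n : nat) (u : R) : R :=
  pgf_from u (n * m).+1 (first_car m n).

(* Main.v *)
Require Import Defs.
From mathcomp Require Import all_boot all_order all_algebra.
From mathcomp Require Import ring.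
Import Order.TTheory GRing.Theory Num.Theory.
Set Implicit Arguments. Unset Strict Implicit. Unset Printing Implicit Defensive.
Local Open Scope ring_scope.

Definition cnt m n (a : pt m n) : nat := #|[pred j | val (a j) == m]|.

Lemma prodX (R : realFieldType) m n (b : pt m n) :
  \prod_(j < n) (if val (b j) == m then 'X else 1 : {poly R}) = 'X ^+ cnt b.
Proof. by rewrite -big_mkcond /= prodr_const. Qed.

Lemma sum_box (R : realFieldType) m n (a : pt m n) (P : 'I_m.+1 -> 'I_m.+1 -> bool) :
 \sum_(b : pt m n | [forall j, P (a j) (b j)]) ('X ^+ cnt b : {poly R}) =
 \prod_(j < n) \sum_(x : 'I_m.+1 | P (a j) x) (if val x == m then 'X else 1 : {poly R}).
Proof.
under [RHS]eq_bigr do rewrite big_mkcond /=.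
rewrite bigA_distr_bigA /= big_mkcond /=; apply: eq_bigr => b _.
case: ifP => [/forallP H|/forallP H].
  by rewrite -prodX; apply: eq_bigr => j _; rewrite H.
have [j Hj] : exists j, ~~ P (a j) (b j).
  apply/existsP; apply: contraT; rewrite negb_exists => /forallP K.
  by exfalso; apply: H => j; have := K j; rewrite negbK.
by rewrite (bigD1 j) //= (negbTE Hj) mul0r.
Qed.

Lemma sum_ltk m k : (\sum_(x < m) (x < k : nat) = minn k m)%N.
Proof.
elim: m => [|m IH]; first by rewrite big_ord0 minn0.
rewrite big_ord_recr /= IH; case: (ltnP m k) => H.
  by rewrite !(minn_idPr _) ?addn1 // ltnW.
by rewrite !(minn_idPl _) ?addn0 // (leq_trans H).
Qed.

Lemma sum_pos m : (\sum_(x < m) (0 < x : nat) = m.-1)%N.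
Proof.
elim: m => [|m IH]; first by rewrite big_ord0.
rewrite big_ord_recr /= IH; case: m {IH} => //= m; by rewrite addn1.
Qed.

Lemma coord_sum (R : realFieldType) m (Q : 'I_m.+1 -> bool) :
 \sum_(x : 'I_m.+1 | Q x) (if val x == m then 'X else 1 : {poly R}) =
 (\sum_(x < m) (Q (widen_ord (leqnSn m) x) : nat))%:R + (if Q ord_max then 'X else 0).
Proof.
rewrite big_mkcond big_ord_recr /= eqxx natr_sum; congr (_ + _).
apply: eq_bigr => x _; rewrite /= ltn_eqF //; by case: (Q _).
Qed.

Lemma coord1 (R : realFieldType) m (a : 'I_m.+1) :
 \sum_(x : 'I_m.+1 | (x <= a)%N) (if val x == m then 'X else 1 : {poly R}) =
 if val a == m then m%:R + 'X else (a.+1)%:R.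
Proof.
rewrite coord_sum /=.
under eq_bigr do rewrite -ltnS.
rewrite sum_ltk; have := ltn_ord a; rewrite ltnS leq_eqVlt.
case/orP => [/eqP->|H]; first by rewrite eqxx leqnn (minn_idPr _).
by rewrite (ltn_eqF H) leqNgt H addr0 (minn_idPl _).
Qed.

Lemma coord2 (R : realFieldType) m (a : 'I_m.+1) : (1 <= m)%N ->
 \sum_(x : 'I_m.+1 | (x <= a)%N && (a - x < m)%N) (if val x == m then 'X else 1 : {poly R}) =
 if val a == m then (m%:R - 1) + 'X else (a.+1)%:R.
Proof.
move=> m1; rewrite coord_sum /=.
have := ltn_ord a; rewrite ltnS leq_eqVlt.
case/orP => [/eqP Ea|H].
  rewrite Ea eqxx leqnn subnn m1.
  have E : forall x : 'I_m, ((x <= m)%N && (m - x < m)%N) = (0 < x)%N.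
    by move=> x; rewrite (ltnW (ltn_ord x)) ltn_subrL m1 andbT.
  under eq_bigr => x _ do rewrite /= E.
  rewrite sum_pos /=; congr (_ + _).
  by rewrite -(prednK m1) mulrSr addrK.
have E : forall x : 'I_m, ((x <= a)%N && (a - x < m)%N) = (x < a.+1)%N.
  by move=> x; rewrite ltnS; case: (leqP x a) => //= _; apply: leq_ltn_trans H; apply: leq_subr.
under eq_bigr => x _ do rewrite /= E.
rewrite sum_ltk (ltn_eqF H) leqNgt H (minn_idPl _) //= addr0.
by [].
Qed.
Lemma inSU m n (a b : pt m n) : (1 <= m)%N ->
  (b \in SU a) = [forall j, (b j <= a j)%N] &&
                 ~~ [forall j, (b j <= a j)%N && (a j - b j < m)%N].
Proof.
move=> m1; rewrite /SU in_setD /Sbox /Uball !inE andbC.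
case: (boolP [forall j, (b j <= a j)%N]) => [/forallP H|H] //=.
congr (~~ _).
have L : forall k, (k < m)%N = (k <= m.-1)%N by move=> k; case: (m) m1 => //.
rewrite [(rho _ _ < m)%N]L /rho.
apply/bigmax_leqP/forallP => /= K j.
  have := K j isT; rewrite H /= L.
  have /eqP-> : (b j - a j == 0)%N by rewrite subn_eq0 H.
  by rewrite max0n.
have /andP[_ K1] := K j.
have /eqP-> : (b j - a j == 0)%N by rewrite subn_eq0 H.
by rewrite max0n -L.
Qed.

Definition cst m n (a : pt m n) (R : realFieldType) : R :=
  \prod_(j < n | val (a j) != m) ((a j).+1)%:R.

Lemma prod_split (R : realFieldType) m n (a : pt m n) (y : R) :
  \prod_(j < n) (if val (a j) == m then y%:P + 'X else ((a j).+1)%:R : {poly R}) =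
  (y%:P + 'X) ^+ cnt a * (cst a R)%:P.
Proof.
rewrite (bigID (fun j => val (a j) == m)) /=; congr (_ * _).
  rewrite (eq_bigr (fun _ => y%:P + 'X)); last by move=> j ->.
  by rewrite prodr_const.
rewrite /cst rmorph_prod; apply: eq_bigr => j /negbTE ->.
by rewrite rmorph_nat.
Qed.

Lemma sumSU_poly (R : realFieldType) m n (a : pt m n) : (1 <= m)%N ->
  \sum_(b in SU a) ('X ^+ cnt b : {poly R}) =
  (((m%:R : R)%:P + 'X) ^+ cnt a - ((m%:R - 1 : R)%:P + 'X) ^+ cnt a) * (cst a R)%:P.
Proof.
move=> m1.
have E1 := sum_box R a (fun a x => (x <= a)%N).
have E2 := sum_box R a (fun a x => (x <= a)%N && (a - x < m)%N).
rewrite /= in E1 E2.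
rewrite (eq_bigr _ (fun j _ => coord1 R (a j))) in E1.
rewrite (eq_bigr _ (fun j _ => coord2 R (a j) m1)) in E2.
have P1 := prod_split a (m%:R : R); rewrite rmorph_nat in P1.
have P2 := prod_split a (m%:R - 1 : R); rewrite rmorphB rmorph1 rmorph_nat in P2.
rewrite P1 in E1. rewrite P2 in E2. rewrite rmorphB rmorph1 !rmorph_nat mulrBl -E1 -E2.
have FA : forall b : pt m n, [forall j, (b j <= a j)%N && (a j - b j < m)%N] =
   [forall j, (b j <= a j)%N] && [forall j, (a j - b j < m)%N].
  move=> b; apply/forallP/andP => [H|[/forallP H1 /forallP H2] j].
    by split; apply/forallP => j; have /andP[] := H j.
  by rewrite H1 H2.
apply/eqP; rewrite eq_sym subr_eq; apply/eqP.
rewrite (bigID (fun b : pt m n => [forall j, (b j <= a j)%N && (a j - b j < m)%N]) (fun b : pt m n => [forall j, (b j <= a j)%N])) /= addrC.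
congr (_ + _); apply: eq_bigl => b; rewrite ?inSU // FA.
by case: [forall j, _].

Qed.
Definition Lf (R : realFieldType) (N : nat) (h : nat -> R) (p : {poly R}) : R :=
  \sum_(i < N) p`_i * h i.

Lemma L_sum (R : realFieldType) N h (I : finType) (P : pred I) (F : I -> {poly R}) :
  Lf N h (\sum_(b | P b) F b) = \sum_(b | P b) Lf N h (F b).
Proof.
rewrite /Lf; under eq_bigr do rewrite coef_sum mulr_suml.
by rewrite exchange_big.
Qed.

Lemma L_B (R : realFieldType) N h (p q : {poly R}) : Lf N h (p - q) = Lf N h p - Lf N h q.
Proof. by rewrite /Lf -sumrB; apply: eq_bigr => i _; rewrite coefB mulrBl. Qed.

Lemma L_MC (R : realFieldType) N h (p : {poly R}) c : Lf N h (p * c%:P) = Lf N h p * c.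
Proof. by rewrite /Lf mulr_suml; apply: eq_bigr => i _; rewrite coefMC mulrAC. Qed.

Lemma L_Mn (R : realFieldType) N h (p : {poly R}) k : Lf N h (p *+ k) = Lf N h p *+ k.
Proof. by rewrite /Lf -sumrMnl; apply: eq_bigr => i _; rewrite coefMn mulrnAl. Qed.

Lemma L_Xn (R : realFieldType) N h k : (k < N)%N -> Lf N h ('X^k : {poly R}) = h k.
Proof.
move=> kN; rewrite /Lf (bigD1 (Ordinal kN)) //= coefXn eqxx mul1r big1 ?addr0 //.
move=> i /eqP H; rewrite coefXn; case: eqP => [E|]; last by rewrite mul0r.
by exfalso; apply: H; apply: val_inj.
Qed.

Lemma L_bin (R : realFieldType) N h (y : R) f : (f < N)%N ->
  Lf N h ((y%:P + 'X) ^+ f) = \sum_(i < f.+1) (y ^+ (f - i) *+ 'C(f, i)) * h i.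
Proof.
move=> fN; rewrite exprDn L_sum; apply: eq_bigr => i _.
rewrite L_Mn mulrC -rmorphXn L_MC L_Xn; last by apply: leq_ltn_trans fN; rewrite -ltnS.
by rewrite mulrC mulrnAl.
Qed.

Lemma cnt_le m n (b : pt m n) : (cnt b <= n)%N.
Proof. by rewrite /cnt; apply: leq_trans (max_card _) _; rewrite card_ord. Qed.

Lemma sumSU_h (R : realFieldType) m n (a : pt m n) (h : nat -> R) : (1 <= m)%N ->
  \sum_(b in SU a) h (cnt b) = cst a R *
    \sum_(i < (cnt a).+1) ((m%:R ^+ (cnt a - i) - (m%:R - 1) ^+ (cnt a - i)) *+ 'C(cnt a, i)) * h i.
Proof.
move=> m1.
transitivity (\sum_(b in SU a) Lf n.+1 h ('X ^+ cnt b)).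
  by apply: eq_bigr => b _; rewrite L_Xn // ltnS cnt_le.
rewrite -L_sum sumSU_poly // L_MC L_B !L_bin ?ltnS ?cnt_le // -sumrB mulrC; congr (_ * _).
by apply: eq_bigr => i _; rewrite mulrnBl mulrBl.
Qed.

Fixpoint Qf (R : realFieldType) (m : nat) (u : R) (g f : nat) : R :=
  match g with
  | 0 => 1
  | g.+1 => if f == 0%N then 1 else
     u * \sum_(1 <= k < f.+1)
        'C(f, k)%:R
        * ((m%:R ^+ k - (m%:R - 1) ^+ k) / ((m%:R + 1) ^+ f - m%:R ^+ f))
        * Qf m u g (f - k)
  end.

Lemma binsum (R : realFieldType) (y : R) f :
  \sum_(i < f.+1) y ^+ (f - i) *+ 'C(f, i) = (y + 1) ^+ f.
Proof. by rewrite exprDn; apply: eq_bigr => i _; rewrite expr1n mulr1. Qed.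

Lemma cardSU (R : realFieldType) m n (a : pt m n) : (1 <= m)%N ->
  (#|SU a|%:R : R) = cst a R * ((m%:R + 1) ^+ cnt a - m%:R ^+ cnt a).
Proof.
move=> m1; have := @sumSU_h R _ _ a (fun _ => 1) m1.
rewrite sumr_const => ->; congr (_ * _).
under eq_bigr do rewrite mulr1 mulrnBl.
by rewrite sumrB !binsum subrK.
Qed.

Lemma cst_gt0 (R : realFieldType) m n (a : pt m n) : 0 < cst a R.
Proof. by rewrite /cst -natr_prod ltr0n prodn_gt0. Qed.

Lemma pgf_Q (R : realFieldType) m n (u : R) g (a : pt m n) : (1 <= m)%N ->
  pgf_from u g a = Qf m u g (cnt a).
Proof.
move=> m1; elim: g a => [|g IH] a //=.
have C := cardSU R a m1.
case: (posnP (cnt a)) => [f0|fpos].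
  move: C; rewrite f0 !expr0 subrr mulr0 => /eqP; rewrite pnatr_eq0 => ->.
  by [].
have Dpos : 0 < (m%:R + 1) ^+ cnt a - m%:R ^+ cnt a :> R.
  by rewrite subr_gt0 ltrXn2r ?ler0n ?ltrDl ?ltr01 // -lt0n.
have : (#|SU a|%:R : R) != 0 by rewrite C mulf_neq0 // gt_eqF // cst_gt0.
rewrite pnatr_eq0 => /negbTE ->; rewrite C.
under eq_bigr do rewrite IH.
rewrite -mulr_sumr sumSU_h //.
set f := cnt a. set D := ((m%:R + 1) ^+ f - m%:R ^+ f) in Dpos *. set c := cst a R.
have c0 : c != 0 by rewrite gt_eqF // cst_gt0.
clear C.
rewrite (reindex_inj rev_ord_inj) /= big_ord_recl /= subSS subn0 subnn !expr0 subrr mul0rn mul0r add0r.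
rewrite big_add1 /= big_mkord.
rewrite !mulr_sumr; apply: eq_bigr => i _.
have iF : (i.+1 <= f)%N by apply: ltn_ord.
rewrite /bump /= add1n subSS subKn // bin_sub // -mulr_natl.
have D0 : D != 0 by rewrite gt_eqF.
by field; rewrite c0 D0.
Qed.

Lemma Qf_fuel (R : realFieldType) m (u : R) N : forall f g,
  (f <= N)%N -> (f < g)%N -> Qf m u g f = Qf m u f.+1 f.
Proof.
elim: N => [|N IH] f g fN fg.
  by move: fN; rewrite leqn0 => /eqP->; case: g fg.
case: g fg => // g fg /=.
case: eqP => // /eqP f0.
congr (_ * _); apply: eq_big_nat => k /andP[k1 kf].
congr (_ * _).
have lt : (f - k < f)%N by rewrite ltn_subrL k1 lt0n.
rewrite (IH (f - k)%N g) ?(IH (f - k)%N f) //.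
- by rewrite -ltnS (leq_trans lt).
- by rewrite -ltnS (leq_trans lt).
- by apply: leq_trans lt _.
Qed.

Lemma cnt_first m n : cnt (first_car m n) = n.
Proof.
rewrite /cnt /first_car -[RHS](card_ord n); apply: eq_card => j.
by rewrite !inE ffunE /= eqxx.
Qed.

Lemma QfS (R : realFieldType) m (u : R) g f : Qf m u g.+1 f =
  if f == 0%N then 1 else
     u * \sum_(1 <= k < f.+1)
        'C(f, k)%:R
        * ((m%:R ^+ k - (m%:R - 1) ^+ k) / ((m%:R + 1) ^+ f - m%:R ^+ f))
        * Qf m u g (f - k).
Proof. by []. Qed.

Theorem mainTheorem1 (R : realFieldType) (m n : nat) (u : R) :
  (1 <= m)%N -> (1 <= n)%N ->
  EY m n u =
  u * \sum_(1 <= k < n.+1)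
        'C(n, k)%:R
        * ((m%:R ^+ k - (m%:R - 1) ^+ k) / ((m%:R + 1) ^+ n - m%:R ^+ n))
        * EY m (n - k) u.
Proof.
move=> m1 n1; rewrite {1}/EY pgf_Q // cnt_first QfS.
case: eqP => [n0|_]; first by move: n1; rewrite n0.
congr (_ * _); apply: eq_big_nat => k /andP[k1 kn].
rewrite /EY pgf_Q // cnt_first; congr (_ * _).
have lt : (n - k < n)%N by rewrite ltn_subrL k1.
rewrite (Qf_fuel _ _ (leqnn _)) ?(Qf_fuel _ _ (leqnn (n - k)%N)) //.
  by rewrite ltnS leq_pmulr.
by apply: leq_trans lt _; rewrite leq_pmulr.
Qed.
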